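(* For non-negative integers $n,p$ define \begin{multline*} g(n,p)=\frac{4p^2+6p+2}{n+2p+2}+4p+(4p^2+4np+4n+10p+6)2^{1-n}+2^{-2p}\\ +2^{-n-2p}\sum_{i=1}^{p+1} i\Big\{2\binom{n+2p+4}{n+2i+1}-\binom{n+2p+4}{n+2i+2}-(2n+4p+6)\binom{2p+4}{2i+1}\Big\}\\ +2^{2-n}\sum_{i=1}^{p+1}\sum_{k=2i-1}^{2p+1} i\,2^{-k}\Big\{\frac{n+2p+1}{n+2p+2}\binom{n+k+2}{n+2i+1}-\binom{n+k+2}{n+2i}+\binom{k+3}{2i+1}\Big\}\\ +2^{-2p}\sum_{i=1}^{p+1}\sum_{k=1}^{n} i\,2^{-k}\Big\{\binom{k+2p+4}{k+2i+2}-\frac{2n+4p+6}{n+2p+2}\binom{k+2p+3}{k+2i+1}\Big\}. \end{multline*} Then $g(n,p)=0$ for all integers $n,p\ge0$.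
   Context: $\binom{a}{b}=\frac{a!}{b!(a-b)!}$ for integers $0\le b\le a$. A sum with no terms equals $0$. *)

(* Defs.v *)
From HB Require Import structures.
From mathcomp Require Import all_boot all_order all_algebra.
Set Implicit Arguments. Unset Strict Implicit. Unset Printing Implicit Defensive.
Import Order.TTheory GRing.Theory Num.Theory.
Local Open Scope ring_scope.

Definition bin (a b : nat) : rat := ('C(a, b))%:R.

Definition pow2inv (m : nat) : rat := (2%:R ^+ m)^-1.

Definition g (n p : nat) : rat :=
  let N : rat := n%:R in
  let P : rat := p%:R in
  (4 * P ^+ 2 + 6 * P + 2) / (N + 2 * P + 2)
  + 4 * P
  + (4 * P ^+ 2 + 4 * N * P + 4 * N + 10 * P + 6) * (2 / 2%:R ^+ n)
  + pow2inv (2 * p)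
  + pow2inv (n + 2 * p) *
      \sum_(1 <= i < p.+2)
        i%:R * (2 * bin (n + 2 * p + 4) (n + 2 * i + 1)
                - bin (n + 2 * p + 4) (n + 2 * i + 2)
                - (2 * N + 4 * P + 6) * bin (2 * p + 4) (2 * i + 1))
  + (4 / 2%:R ^+ n) *
      \sum_(1 <= i < p.+2) \sum_((2 * i).-1 <= k < (2 * p + 1).+1)
        i%:R * pow2inv k *
          ((N + 2 * P + 1) / (N + 2 * P + 2) * bin (n + k + 2) (n + 2 * i + 1)
           - bin (n + k + 2) (n + 2 * i)
           + bin (k + 3) (2 * i + 1))
  + pow2inv (2 * p) *
      \sum_(1 <= i < p.+2) \sum_(1 <= k < n.+1)
        i%:R * pow2inv k *
          (bin (k + 2 * p + 4) (k + 2 * i + 2)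
           - (2 * N + 4 * P + 6) / (N + 2 * P + 2) * bin (k + 2 * p + 3) (k + 2 * i + 1)).

(* Main.v *)
Require Import Defs.
From HB Require Import structures.
From mathcomp Require Import all_boot all_order all_algebra.
From mathcomp Require Import ring lra zify.
Set Implicit Arguments. Unset Strict Implicit. Unset Printing Implicit Defensive.
Import Order.TTheory GRing.Theory Num.Theory.
Local Open Scope ring_scope.

Definition Phi (T l : nat) : rat := \sum_(j < l.+1) bin T j.

Lemma binS' T j : bin T.+1 j.+1 = bin T j.+1 + bin T j.
Proof. by rewrite /bin binS natrD. Qed.
Lemma bin0' T : bin T 0 = 1. Proof. by rewrite /bin bin0. Qed.
Lemma binn' T : bin T T = 1. Proof. by rewrite /bin binn. Qed.
Lemma binsmall' T j : (T < j)%N -> bin T j = 0.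
Proof. by move=> h; rewrite /bin bin_small. Qed.
Lemma binsub' T j : (j <= T)%N -> bin T (T - j) = bin T j.
Proof. by move=> h; rewrite /bin bin_sub. Qed.

Lemma Phi0 T : Phi T 0 = 1.
Proof. by rewrite /Phi big_ord_recr big_ord0 /= add0r bin0'. Qed.
Lemma PhiS T l : Phi T l.+1 = Phi T l + bin T l.+1.
Proof. by rewrite /Phi big_ord_recr. Qed.

Lemma Phi_S T l : Phi T.+1 l = 2 * Phi T l - bin T l.
Proof.
elim: l => [|l IH]; first by rewrite !Phi0 !bin0'; ring.
by rewrite !PhiS IH binS'; ring.
Qed.

Lemma Phi_full T : Phi T T = 2 ^+ T.
Proof.
elim: T => [|T IH]; first by rewrite Phi0.
by rewrite PhiS Phi_S IH !binn' exprS; ring.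
Qed.

Lemma Phi_sym T L R : (L + R + 1 = T)%N -> Phi T L + Phi T R = 2 ^+ T.
Proof.
elim: T L R => [|T IH] L R h; first lia.
case: R h => [|R] h.
  have -> : L = T by lia.
  by rewrite Phi0 -(Phi_full T.+1) PhiS binn'; ring.
have E : Phi T L = 2 ^+ T - Phi T R by rewrite -(IH L R); [ring | lia].
rewrite !Phi_S PhiS E.
have -> : L = (T - R.+1)%N by lia.
by rewrite binsub' ?exprS; [ring | lia].
Qed.

Definition pow2inv' := pow2inv.
Lemma pow2invS k : pow2inv k.+1 = pow2inv k / 2.
Proof. by rewrite /pow2inv exprS invfM mulrC. Qed.
Lemma pow2invD a b : pow2inv (a + b) = pow2inv a * pow2inv b.
Proof. by rewrite /pow2inv exprD invfM. Qed.
Lemma pow2nz k : (2 : rat) ^+ k != 0.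
Proof. by rewrite expf_neq0. Qed.

Lemma Qlem b L K0 K' : (K0 <= K')%N ->
  \sum_(K0 <= k < K') pow2inv k * bin (k + b) L =
  2 * (pow2inv K0 * Phi (K0 + b) L - pow2inv K' * Phi (K' + b) L).
Proof.
elim: K' => [|K' IH]; first by rewrite leqn0 => /eqP ->; rewrite big_geq //; ring.
rewrite leq_eqVlt => /orP[/eqP <-|h]; first by rewrite big_geq //; ring.
move: h; rewrite ltnS => h; rewrite big_nat_recr //= IH // pow2invS addSn Phi_S; by field.
Qed.

Lemma transfer (f : nat -> rat) N :
  \sum_(j < N.+2) f j * bin N.+1 j = \sum_(j < N.+1) (f j + f j.+1) * bin N j.
Proof.
rewrite big_ord_recl /= bin0'.
under eq_bigr => j _ do rewrite /bump /= binS' mulrDr.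
rewrite big_split /=.
have H : \sum_(j < N.+2) f j * bin N j = f 0%N + \sum_(i < N.+1) f i.+1 * bin N i.+1.
  by rewrite big_ord_recl /= bin0' mulr1.
have H2 : \sum_(j < N.+2) f j * bin N j = \sum_(i < N.+1) f i * bin N i.
  by rewrite big_ord_recr /= binsmall' // mulr0 addr0.
under [X in _ = X]eq_bigr => j _ do rewrite mulrDl.
rewrite big_split /=.
rewrite -H2 H; ring.
Qed.

Lemma M0 N : \sum_(j < N.+1) bin N j = 2 ^+ N.
Proof.
elim: N => [|N IH]; first by rewrite big_ord_recr big_ord0 /= bin0'; ring.
have := transfer (fun _ => 1) N.
under eq_bigr => j _ do rewrite mul1r.
move=> ->. under eq_bigr => j _ do rewrite mulrDl mul1r.
by rewrite big_split /= IH exprS; ring.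
Qed.

Lemma natS (m : nat) : (m.+1)%:R = m%:R + 1 :> rat.
Proof. by rewrite -addn1 natrD. Qed.

Lemma M1 N : \sum_(j < N.+1) j%:R * bin N j = N%:R * 2 ^+ N / 2.
Proof.
elim: N => [|N IH]; first by rewrite big_ord_recr big_ord0 /=; ring.
rewrite (transfer (fun j => j%:R)).
under eq_bigr => j _ do rewrite natS mulrDl mulrDl mul1r.
rewrite !big_split /= IH M0 exprS natS; by field.
Qed.

Lemma M2 N : \sum_(j < N.+1) j%:R ^+ 2 * bin N j = N%:R * (N%:R + 1) * 2 ^+ N / 4.
Proof.
elim: N => [|N IH]; first by rewrite big_ord_recr big_ord0 /=; ring.
rewrite (transfer (fun j => j%:R ^+ 2)).
rewrite (eq_bigr (fun j : 'I_N.+1 => 2 * (j%:R ^+ 2 * bin N j) + 2 * (j%:R * bin N j) + bin N j)); last by move=> j _; rewrite natS; ring.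
rewrite !big_split /= -!mulr_sumr IH M1 M0 exprS natS; by field.
Qed.

Lemma pairing (F : nat -> rat) K :
  \sum_(j < 2 * K) F j = \sum_(t < K) (F (2 * t)%N + F (2 * t).+1).
Proof.
elim: K => [|K IH]; first by rewrite !big_ord0.
have -> : (2 * K.+1 = (2 * K).+2)%N by lia.
by rewrite !big_ord_recr /= IH -addrA.
Qed.

Lemma sum3 (r : seq nat) (a c : rat) (w x y z : nat -> rat) :
  \sum_(k <- r) a * w k * (c * x k - y k + z k) =
  a * (c * \sum_(k <- r) (w k * x k) - \sum_(k <- r) (w k * y k) + \sum_(k <- r) (w k * z k)).
Proof.
rewrite mulrDr mulrBr mulrA !mulr_sumr -sumrB -big_split /=.
by apply: eq_bigr => k _; ring.
Qed.

Lemma sum2 (r : seq nat) (a c : rat) (w x y : nat -> rat) :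
  \sum_(k <- r) a * w k * (x k - c * y k) =
  a * (\sum_(k <- r) (w k * x k) - c * \sum_(k <- r) (w k * y k)).
Proof.
rewrite mulrBr mulrA !mulr_sumr -sumrB /=.
by apply: eq_bigr => k _; ring.
Qed.

Lemma odd2 t : odd (2 * t) = false.
Proof. by rewrite oddM. Qed.

Lemma conv_i (p : nat) (G : nat -> rat) :
  (forall t, (p.+2 <= t)%N -> G t = 0) -> G 0%N = 0 ->
  \sum_(t < p.+3) G t = \sum_(1 <= i < p.+2) G i.
Proof.
move=> Hb H0.
rewrite big_ord_recr /= Hb // addr0 -(big_mkord xpredT) big_ltn // H0 add0r.
by apply: eq_big.
Qed.

Lemma Sa p : \sum_(1 <= i < p.+2) i%:R * bin (2 * p + 4) (2 * i+1) = (p + 1)%:R * 2 ^+ (2 * p + 2).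
Proof.
pose fa j : rat := if odd j then (j%:R - 1) / 2 else 0.
have E1 : \sum_(j < (2 * p + 4).+1) fa j * bin (2 * p + 4) j = (p + 1)%:R * 2 ^+ (2 * p + 2).
  have -> : (2 * p + 4 = (2 * p + 2).+2)%N by lia.
  rewrite transfer.
  pose ha j : rat := j%:R / 2 - (if odd j then 1/2 else 0).
  rewrite (eq_bigr (fun j : 'I_(2 * p + 2).+2 => ha j * bin (2 * p + 2).+1 j)); last first.
    move=> j _; rewrite /fa /ha /=; case: (odd j) => /=; rewrite ?natS; by field.
  rewrite (transfer ha (2 * p + 2)).
  rewrite (eq_bigr (fun j : 'I_(2 * p + 2).+1 => j%:R * bin (2 * p + 2) j)); last first.
    move=> j _; rewrite /ha /=; case: (odd j) => /=; rewrite ?natS; by field.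
  rewrite M1 -addn1 natrD natrM; by field.
rewrite -E1.
have X : \sum_(j < 2 * (p + 3)) fa j * bin (2 * p + 4) j = \sum_(j < (2 * p + 4).+1) fa j * bin (2 * p + 4) j.
  have -> : (2 * (p + 3) = (2 * p + 4).+2)%N by lia.
  by rewrite big_ord_recr /= binsmall' ?mulr0 ?addr0.
rewrite -X; move: (pairing (fun j => fa j * bin (2 * p + 4) j) (p + 3)) => /= ->.
rewrite (eq_bigr (fun t : 'I_(p + 3) => t%:R * bin (2 * p + 4) (2 * t + 1))); last first.
  move=> t _; rewrite /fa /= odd2 /= natS natrM addn1; by field.
have -> : (p + 3 = p.+3)%N by lia.
rewrite (conv_i (G := fun t => t%:R * bin (2 * p + 4) (2 * t + 1))) //.
  by move=> t ht; rewrite binsmall' ?mulr0 //; lia.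
by rewrite mul0r.
Qed.

Lemma conv0 (K : nat) (G : nat -> rat) : G 0%N = 0 ->
  \sum_(t < K.+1) G t = \sum_(1 <= i < K.+1) G i.
Proof.
move=> H0; rewrite -(big_mkord xpredT) big_ltn // H0 add0r.
by apply: eq_big.
Qed.

Lemma Sc p : \sum_(1 <= i < p.+2) i%:R * bin (2 * p + 4) (2 * i + 2) = p%:R * 2 ^+ (2 * p + 2) + 1.
Proof.
pose fc j : rat := if odd j then 0 else j%:R / 2 - 1.
have E1 : \sum_(j < (2 * p + 4).+1) fc j * bin (2 * p + 4) j = p%:R * 2 ^+ (2 * p + 2).
  have -> : (2 * p + 4 = (2 * p + 2).+2)%N by lia.
  rewrite transfer.
  pose hc j : rat := j%:R / 2 - 1 + (if odd j then 1/2 else 0).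
  rewrite (eq_bigr (fun j : 'I_(2 * p + 2).+2 => hc j * bin (2 * p + 2).+1 j)); last first.
    move=> j _; rewrite /fc /hc /=; case: (odd j) => /=; rewrite ?natS; by field.
  rewrite (transfer hc (2 * p + 2)).
  rewrite (eq_bigr (fun j : 'I_(2 * p + 2).+1 => j%:R * bin (2 * p + 2) j - bin (2 * p + 2) j)); last first.
    move=> j _; rewrite /hc /=; case: (odd j) => /=; rewrite ?natS; by field.
  rewrite sumrB M1 M0 -addn1 natrD natrM exprD; by field.
have X : \sum_(j < 2 * (p + 3)) fc j * bin (2 * p + 4) j = \sum_(j < (2 * p + 4).+1) fc j * bin (2 * p + 4) j.
  have -> : (2 * (p + 3) = (2 * p + 4).+2)%N by lia.
  by rewrite big_ord_recr /= binsmall' ?mulr0 ?addr0.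
have Y : \sum_(j < (2 * p + 4).+1) fc j * bin (2 * p + 4) j = -1 + \sum_(1 <= i < p.+2) i%:R * bin (2 * p + 4) (2 * i + 2).
  rewrite -X; move: (pairing (fun j => fc j * bin (2 * p + 4) j) (p + 3)) => /= ->.
  rewrite (eq_bigr (fun t : 'I_(p + 3) => (t%:R - 1) * bin (2 * p + 4) (2 * t))); last first.
    move=> t _; rewrite /fc /= odd2 /= natrM; by field.
  have -> : (p + 3 = p.+2.+1)%N by lia.
  rewrite big_ord_recl /= bin0'.
  rewrite (eq_bigr (fun i : 'I_p.+2 => i%:R * bin (2 * p + 4) (2 * i + 2))); last first.
    move=> i _; rewrite /bump /= add1n natS; congr (_ * bin _ _); [ring | lia].
  move: (@conv0 p.+1 (fun t => t%:R * bin (2 * p + 4) (2 * t + 2)) (mul0r _)) => /= ->.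
  by rewrite sub0r mulN1r.
by move: Y; rewrite E1 => ->; ring.
Qed.

Lemma KL r : ((r %/ 2) * (r %/ 2).+1 + 2 * ((r.-1 %/ 2) * (r.-1 %/ 2).+1)
   + (r.-2 %/ 2) * (r.-2 %/ 2).+1 + r = r * r)%N.
Proof.
case: r => [|[|s]] //=.
have [a [b [hb ->]]] : exists a b, (b < 2)%N /\ s = (2 * a + b)%N.
  by exists (s %/ 2)%N, (s %% 2)%N; split; [rewrite ltn_mod | rewrite mulnC -divn_eq].
have -> : ((2 * a + b).+2 %/ 2 = a + 1)%N by lia.
have -> : ((2 * a + b).+1 %/ 2 = a + b)%N by lia.
have -> : ((2 * a + b) %/ 2 = a)%N by lia.
case: b hb => [|[|]] // _; nia.
Qed.

Lemma gauss q : \sum_(1 <= i < q.+1) (i%:R : rat) = q%:R * (q%:R + 1) / 2.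
Proof.
elim: q => [|q IH]; first by rewrite big_geq //; ring.
by rewrite big_nat_recr //= IH natS; field.
Qed.

Lemma PhiInd N l : (l <= N)%N -> Phi N l = \sum_(j < N.+1) (j <= l)%:R * bin N j.
Proof.
move=> hl; rewrite /Phi (big_ord_widen N.+1 (fun j => bin N j)) // big_mkcond /=.
by apply: eq_bigr => j _; rewrite ltnS; case: (j <= l)%N; rewrite ?mul1r ?mul0r.
Qed.

Lemma Wlem p j : \sum_(1 <= i < p.+2) i%:R * ((j <= 2 * p + 2 - 2 * i)%N)%:R =
  ((2 * p + 2 - j) %/ 2)%N%:R * (((2 * p + 2 - j) %/ 2)%N%:R + 1) / 2 :> rat.
Proof.
set q := ((2 * p + 2 - j) %/ 2)%N.
have hq : (q <= p + 1)%N by rewrite /q; lia.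
rewrite (big_cat_nat _ (n := q.+1)) //=; last lia.
rewrite -gauss [X in _ + X = _]big1_seq ?addr0; last first.
  move=> i /andP[_]; rewrite mem_index_iota => hi.
  have -> : (j <= 2 * p + 2 - 2 * i)%N = false by rewrite /q in hi; lia.
  by rewrite mulr0.
apply: eq_big_nat => i hi.
have -> : (j <= 2 * p + 2 - 2 * i)%N = true by rewrite /q in hi; lia.
by rewrite mulr1.
Qed.

Definition fb (R j : nat) : rat := ((R - j) %/ 2)%N%:R * (((R - j) %/ 2)%N%:R + 1) / 2.

Lemma fb3 R j : (j <= R)%N ->
  (fb R j + fb R j.+1) + (fb R j.+1 + fb R j.+2) =
  ((R%:R - j%:R) ^+ 2 - (R%:R - j%:R)) / 2.
Proof.
move=> hj; rewrite /fb !subnS.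
have := KL (R - j); set r := (R - j)%N.
set q0 := (r %/ 2)%N; set q1 := (r.-1 %/ 2)%N; set q2 := (r.-2 %/ 2)%N.
move=> /(congr1 (fun x => x%:R : rat)); rewrite !natrD !natrM => H.
have Hr : r%:R = R%:R - j%:R :> rat by rewrite /r natrB.
rewrite -Hr.
rewrite !natS in H.
by rewrite expr2 -H; field.
Qed.

Lemma Sb p : \sum_(1 <= i < p.+2) i%:R * Phi (2 * p + 4) (2 * p + 2 - 2 * i) =
  (p + 1)%:R * (2 * p + 1)%:R * 2 ^+ (2 * p).
Proof.
rewrite (eq_big_nat _ _ (F2 := fun i => \sum_(j < (2 * p + 4).+1) (i%:R * ((j <= 2 * p + 2 - 2 * i)%N)%:R) * bin (2 * p + 4) j)); last first.
  move=> i hi; rewrite PhiInd; last lia.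
  by rewrite mulr_sumr; apply: eq_bigr => j _; rewrite mulrA.
rewrite exchange_big /=.
rewrite (eq_bigr (fun j : 'I_(2 * p + 4).+1 => fb (2 * p + 2) j * bin (2 * p + 4) j)); last first.
  by move=> j _; rewrite -mulr_suml Wlem.
have -> : (2 * p + 4 = (2 * p + 2).+2)%N by lia.
rewrite transfer.
pose hb j := fb (2 * p + 2) j + fb (2 * p + 2) j.+1.
rewrite (eq_bigr (fun j : 'I_(2 * p + 2).+2 => hb j * bin (2 * p + 2).+1 j)) //.
rewrite (transfer hb (2 * p + 2)).
rewrite (eq_bigr (fun j : 'I_(2 * p + 2).+1 =>
   ((2 * p + 2)%:R ^+ 2 * bin (2 * p + 2) j - (2 * (2 * p + 2)%:R - 1) * (j%:R * bin (2 * p + 2) j)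
    + j%:R ^+ 2 * bin (2 * p + 2) j + (2 * p + 2)%:R * (- bin (2 * p + 2) j) ) / 2)); last first.
  move=> j _; rewrite /hb fb3; last by rewrite -ltnS.
  by field.
rewrite -mulr_suml !big_split /= -!mulr_sumr !sumrN -!mulr_sumr M0 M1 M2.
rewrite !natrD exprD; by field.
Qed.

Lemma binE T m m' : (m <= T)%N -> (T - m = m')%N -> bin T m = bin T m'.
Proof. by move=> h <-; rewrite binsub'. Qed.

Lemma perI n p i : (1 <= i <= p.+1)%N ->
 pow2inv (n + 2 * p) * (i%:R * (2 * bin (n + 2 * p + 4) (n + 2 * i + 1) - bin (n + 2 * p + 4) (n + 2 * i + 2) - (2 * n%:R + 4 * p%:R + 6) * bin (2 * p + 4) (2 * i + 1)))
 + 4 / 2%:R ^+ n * \sum_((2 * i).-1 <= k < (2 * p + 1).+1) i%:R * pow2inv k * ((n%:R + 2 * p%:R + 1) / (n%:R + 2 * p%:R + 2) * bin (n + k + 2) (n + 2 * i + 1) - bin (n + k + 2) (n + 2 * i) + bin (k + 3) (2 * i + 1))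
 + pow2inv (2 * p) * \sum_(1 <= k < n.+1) i%:R * pow2inv k * (bin (k + 2 * p + 4) (k + 2 * i + 2) - (2 * n%:R + 4 * p%:R + 6) / (n%:R + 2 * p%:R + 2) * bin (k + 2 * p + 3) (k + 2 * i + 1))
 = (- (2 * n%:R + 4 * p%:R + 4) / (2 ^+ n * 2 ^+ (2 * p))) * (i%:R * bin (2 * p + 4) (2 * i + 1))
   + (4 / (2 ^+ n * 2 ^+ (2 * p)) - 2 / (2 ^+ (2 * p) * (n%:R + 2 * p%:R + 2))) * (i%:R * Phi (2 * p + 4) (2 * p + 2 - 2 * i))
   + (- 1 / 2 ^+ (2 * p)) * (i%:R * bin (2 * p + 4) (2 * i + 2)).
Proof.
move=> /andP[hi1 hi2].
set A : rat := 2 ^+ n.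
set B : rat := 2 ^+ (2 * p).
set Q : rat := 2 ^+ (2 * i).-1.
set x := Phi (n + 2 * p + 4) (2 * p + 2 - 2 * i).
set y := bin (n + 2 * p + 4) (2 * p + 2 - 2 * i).
set z := bin (n + 2 * p + 4) (2 * p + 3 - 2 * i).
set u := Phi (2 * p + 4) (2 * p + 2 - 2 * i).
set v := bin (2 * p + 4) (2 * i + 1).
set w := bin (2 * p + 4) (2 * i + 2).
have hA : A != 0 by apply: pow2nz.
have hB : B != 0 by apply: pow2nz.
have hQ : Q != 0 by apply: pow2nz.
have hm : (n%:R + 2 * p%:R + 2 : rat) != 0.
  have -> : (n%:R + 2 * p%:R + 2 : rat) = (n + 2 * p + 2)%N%:R by rewrite natrD natrD natrM.
  by rewrite pnatr_eq0 addn2.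
have eM : (2 : rat) ^+ (n + 2 * p + 4) = A * B * 16.
  by rewrite exprD exprD -/A -/B; ring.
have e5 : (2 : rat) ^+ (2 * p + 5) = B * 32.
  by rewrite exprD -/B; ring.
have eNI : (2 : rat) ^+ (n + 2 * i + 1) = A * Q * 4.
  have -> : (n + 2 * i + 1 = n + (2 * i).-1 + 2)%N by lia.
  by rewrite exprD exprD -/A -/Q; ring.
have eI : (2 : rat) ^+ (2 * i + 2) = Q * 8.
  have -> : (2 * i + 2 = (2 * i).-1 + 3)%N by lia.
  by rewrite exprD -/Q; ring.
have b1 : bin (n + 2 * p + 4) (n + 2 * i + 1) = z by rewrite /z; apply: binE; lia.
have b2 : bin (n + 2 * p + 4) (n + 2 * i + 2) = y by rewrite /y; apply: binE; lia.
have Pxz : Phi (n + 2 * p + 4) (2 * p + 3 - 2 * i) = x + z.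
  rewrite /x /z; have -> : (2 * p + 3 - 2 * i = (2 * p + 2 - 2 * i).+1)%N by lia.
  by rewrite PhiS.
have Pu : Phi (2 * p + 5) (2 * p + 3 - 2 * i) = 2 * u + v.
  have -> : (2 * p + 5 = (2 * p + 4).+1)%N by lia.
  rewrite Phi_S.
  have -> : (2 * p + 3 - 2 * i = (2 * p + 2 - 2 * i).+1)%N by lia.
  rewrite PhiS -/u (binE (m' := (2 * i + 1)%N)) -/v; [ring | lia | lia].
have S1 : \sum_((2 * i).-1 <= k < (2 * p + 1).+1) pow2inv k * bin (n + k + 2) (n + 2 * i + 1)
   = 2 * (Q^-1 * (A * Q * 4) - (B * 4)^-1 * (A * B * 16 - x)).
  rewrite (eq_big_nat _ _ (F2 := fun k => pow2inv k * bin (k + (n + 2)) (n + 2 * i + 1))); last first.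
    by move=> k _; congr (_ * bin _ _); lia.
  rewrite Qlem; last lia.
  have -> : ((2 * i).-1 + (n + 2) = n + 2 * i + 1)%N by lia.
  rewrite Phi_full eNI.
  have <- : Phi (n + 2 * p + 4) (n + 2 * i + 1) + x = A * B * 16.
    by rewrite -eM; apply: Phi_sym; lia.
  have -> : ((2 * p + 1).+1 + (n + 2) = n + 2 * p + 4)%N by lia.
  rewrite /pow2inv -/Q (_ : (2 * p + 1).+1 = 2 * p + 2)%N; last lia.
  rewrite exprD -/B; ring.
have S2 : \sum_((2 * i).-1 <= k < (2 * p + 1).+1) pow2inv k * bin (n + k + 2) (n + 2 * i)
   = 2 * (Q^-1 * (A * Q * 4 - 1) - (B * 4)^-1 * (A * B * 16 - (x + z))).
  rewrite (eq_big_nat _ _ (F2 := fun k => pow2inv k * bin (k + (n + 2)) (n + 2 * i))); last first.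
    by move=> k _; congr (_ * bin _ _); lia.
  rewrite Qlem; last lia.
  have -> : ((2 * i).-1 + (n + 2) = n + 2 * i + 1)%N by lia.
  have <- : Phi (n + 2 * i + 1) (n + 2 * i) + 1 = A * Q * 4.
    by rewrite -eNI -[X in _ + X](Phi0 (n + 2 * i + 1)); apply: Phi_sym; lia.
  have <- : Phi (n + 2 * p + 4) (n + 2 * i) + (x + z) = A * B * 16.
    by rewrite -eM -Pxz; apply: Phi_sym; lia.
  have -> : ((2 * p + 1).+1 + (n + 2) = n + 2 * p + 4)%N by lia.
  rewrite /pow2inv -/Q (_ : (2 * p + 1).+1 = 2 * p + 2)%N; last lia.
  rewrite exprD -/B; ring.
have S3 : \sum_((2 * i).-1 <= k < (2 * p + 1).+1) pow2inv k * bin (k + 3) (2 * i + 1)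
   = 2 * (Q^-1 * (Q * 8 - 1) - (B * 4)^-1 * (B * 32 - (2 * u + v))).
  rewrite Qlem; last lia.
  have -> : ((2 * i).-1 + 3 = 2 * i + 2)%N by lia.
  have <- : Phi (2 * i + 2) (2 * i + 1) + 1 = Q * 8.
    by rewrite -eI -[X in _ + X](Phi0 (2 * i + 2)); apply: Phi_sym; lia.
  have <- : Phi (2 * p + 5) (2 * i + 1) + (2 * u + v) = B * 32.
    by rewrite -e5 -Pu; apply: Phi_sym; lia.
  have -> : ((2 * p + 1).+1 + 3 = 2 * p + 5)%N by lia.
  rewrite /pow2inv -/Q (_ : (2 * p + 1).+1 = 2 * p + 2)%N; last lia.
  rewrite exprD -/B; ring.
have S4 : \sum_(1 <= k < n.+1) pow2inv k * bin (k + 2 * p + 4) (k + 2 * i + 2)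
   = 2 * (2^-1 * (2 * u - w) - (A * 2)^-1 * (2 * x - y)).
  rewrite (eq_big_nat _ _ (F2 := fun k => pow2inv k * bin (k + (2 * p + 4)) (2 * p + 2 - 2 * i))); last first.
    by move=> k _; congr (_ * _); rewrite addnA; apply: binE; lia.
  rewrite Qlem // -/y.
  have -> : (1 + (2 * p + 4) = (2 * p + 4).+1)%N by lia.
  have -> : (n.+1 + (2 * p + 4) = (n + 2 * p + 4).+1)%N by lia.
  rewrite !Phi_S -/x -/u -/y (binE (m' := (2 * i + 2)%N)) -/w; [|lia|lia].
  by rewrite /pow2inv expr1 exprSr -/A.
have S5 : \sum_(1 <= k < n.+1) pow2inv k * bin (k + 2 * p + 3) (k + 2 * i + 1)
   = 2 * (2^-1 * u - (A * 2)^-1 * x).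
  rewrite (eq_big_nat _ _ (F2 := fun k => pow2inv k * bin (k + (2 * p + 3)) (2 * p + 2 - 2 * i))); last first.
    by move=> k _; congr (_ * _); rewrite addnA; apply: binE; lia.
  rewrite Qlem //.
  have -> : (1 + (2 * p + 3) = 2 * p + 4)%N by lia.
  have -> : (n.+1 + (2 * p + 3) = n + 2 * p + 4)%N by lia.
  by rewrite -/x -/u /pow2inv expr1 exprSr -/A.
rewrite b1 b2 sum3 sum2 S1 S2 S3 S4 S5.
rewrite /pow2inv exprD -/A -/B -/Q -/A.
field.
by rewrite hA hB hQ hm.
Qed.

Lemma combine (X a b c : rat) (r : seq nat) (F G H : nat -> rat) :
  X + a * \sum_(i <- r) F i + b * \sum_(i <- r) G i + c * \sum_(i <- r) H i =
  X + \sum_(i <- r) (a * F i + b * G i + c * H i).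
Proof. by rewrite !big_split /= -!mulr_sumr !addrA. Qed.

Theorem lemma13 (n p : nat) : g n p = 0.
Proof.
unfold g; cbv zeta.
rewrite combine.
rewrite (eq_big_nat _ _ (F2 := fun i => 
   (- (2 * n%:R + 4 * p%:R + 4) / (2 ^+ n * 2 ^+ (2 * p))) * (i%:R * bin (2 * p + 4) (2 * i + 1))
   + (4 / (2 ^+ n * 2 ^+ (2 * p)) - 2 / (2 ^+ (2 * p) * (n%:R + 2 * p%:R + 2))) * (i%:R * Phi (2 * p + 4) (2 * p + 2 - 2 * i))
   + (- 1 / 2 ^+ (2 * p)) * (i%:R * bin (2 * p + 4) (2 * i + 2)))); last first.
  by move=> i hi; apply: perI.
rewrite !big_split /= -!mulr_sumr Sa Sb Sc.
rewrite /pow2inv [2 ^+ (2 * p + 2)]exprD !natrD.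
have hA : (2 : rat) ^+ n != 0 by apply: pow2nz.
have hB : (2 : rat) ^+ (2 * p) != 0 by apply: pow2nz.
have hm : (n%:R + 2 * p%:R + 2 : rat) != 0.
  have -> : (n%:R + 2 * p%:R + 2 : rat) = (n + 2 * p + 2)%N%:R by rewrite natrD natrD natrM.
  by rewrite pnatr_eq0 addn2.
move: hA hB hm; set A := (2 : rat) ^+ n; set B := (2 : rat) ^+ (2 * p) => hA hB hm.
field.
by rewrite hA hB hm.
Qed.
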